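(* Let $f$ be a finite sequence of positive integers. The following are equivalent: (1) $f$ is the face vector of a flag complex; (2) $f$ is the $h$-vector (with trailing zeros removed) of $\mathrm{Ind}(G^\pi)$ for some non-empty graph $G$ and some clique vertex-partition $\pi$ of $G$; (3) $f$ is the $h$-vector (with trailing zeros removed) of $\mathrm{Ind}(G^\tau)$ for some non-empty graph $G$, where $\tau$ is the trivial partition of $G$ (i.e. $G^\tau$ is the fully-whiskered graph).
   Context: A flag complex is a simplicial complex whose Stanley–Reisner ideal is generated by quadratic monomials, equivalently one of the form $\mathrm{Ind}(G)$, the complex of independent sets of a graph $G$. A clique vertex-partition of $G=(V,E)$ is a set $\pi=\{W_1,\ldots,W_t\}$ of pairwise disjoint (possibly empty) cliques of $G$ whose union is $V$; $G^\pi$ is the graph with vertex set $V\cup\{w_1,\ldots,w_t\}$ ($w_i$ new) and edge set $E\cup\{vw_i : v\in W_i\}$. The trivial partition of $G$ with $V=\{v_1,\ldots,v_n\}$ is $\tau=\{\{v_1\},\ldots,\{v_n\}\}$, so $G^\tau$ attaches a new degree-one vertex to each vertex of $G$. For a $(d-1)$-dimensional complex, the face vector is $(f_{-1},\ldots,f_{d-1})$, $f_i$ = number of faces with $i+1$ elements, and the $h$-vector is $(h_0,\ldots,h_d)$, $h_j=\sum_{i=0}^{j}(-1)^{j-i}\binom{d-i}{j-i}f_{i-1}$. *)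

(* Defs.v *)
From HB Require Import structures.
From mathcomp Require Import all_boot all_order all_algebra.
Set Implicit Arguments. Unset Strict Implicit. Unset Printing Implicit Defensive.
Import GRing.Theory Num.Theory.

Definition is_graph (V : finType) (adj : rel V) : Prop :=
  symmetric adj /\ irreflexive adj.

Definition indep (V : finType) (adj : rel V) (A : {set V}) : bool :=
  [forall x in A, forall y in A, ~~ adj x y].

Definition Ind (V : finType) (adj : rel V) : {set {set V}} :=
  [set A | indep adj A].

(* For a complex D, cdim D = d where D is (d-1)-dimensional (max face size). *)
Definition cdim (V : finType) (D : {set {set V}}) : nat :=
  \max_(A in D) #|A|.

(* Face vector (f_{-1}, ..., f_{d-1}); entry at index k counts faces with k elements. *)
Definition fvec (V : finType) (D : {set {set V}}) : seq nat :=
  [seq #|[set A in D | #|A| == k]| | k <- iota 0 (cdim D).+1].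

(* h-vector (h_0, ..., h_d):
   h_j = sum_{i=0}^j (-1)^(j-i) C(d-i, j-i) f_{i-1}, and f_{i-1} = nth 0 (fvec D) i. *)
Definition hvec (V : finType) (D : {set {set V}}) : seq int :=
  let d := cdim D in
  let f := fvec D in
  [seq (\sum_(i < j.+1)
          (-1) ^+ (j - i) * ('C(d - i, j - i))%:Z * (nth 0%N f i)%:Z)%R
   | j <- iota 0 d.+1].

Definition strip0 (s : seq int) : seq int :=
  let r := rev s in rev (drop (find (fun x => x != 0%R) r) r).

(* Cliques and clique vertex-partitions pi = {W_1, ..., W_t} (indexed by 'I_t;
   blocks pairwise disjoint, possibly empty, pairwise distinct as sets, covering V). *)
Definition is_clique (V : finType) (adj : rel V) (W : {set V}) : Prop :=
  forall x y, x \in W -> y \in W -> x != y -> adj x y.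

Definition clique_vpart (V : finType) (adj : rel V) (t : nat)
    (W : 'I_t -> {set V}) : Prop :=
  [/\ forall i, is_clique adj (W i),
      forall i j, i != j -> [disjoint W i & W j],
      forall i j, W i = W j -> i = j
    & forall v, exists i, v \in W i].

Definition whisker (V : finType) (adj : rel V) (t : nat) (W : 'I_t -> {set V})
    : rel (V + 'I_t)%type :=
  fun x y =>
    match x, y with
    | inl a, inl b => adj a b
    | inl a, inr i => a \in W i
    | inr i, inl a => a \in W i
    | inr _, inr _ => false
    end.

Definition triv_part (V : finType) : 'I_#|V| -> {set V} :=
  fun i => [set enum_val i].

Definition is_flag_fvec (f : seq nat) : Prop :=
  exists (V : finType) (adj : rel V),
    [/\ is_graph adj, 0 < #|V| & fvec (Ind adj) = f].

Definition is_hvec_whisker_part (f : seq nat) : Prop :=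
  exists (V : finType) (adj : rel V) (t : nat) (W : 'I_t -> {set V}),
    [/\ is_graph adj, 0 < #|V|, clique_vpart adj W &
        strip0 (hvec (Ind (whisker adj W))) = map Posz f].

Definition is_hvec_whisker_triv (f : seq nat) : Prop :=
  exists (V : finType) (adj : rel V),
    [/\ is_graph adj, 0 < #|V| &
        strip0 (hvec (Ind (@whisker V adj #|V| (@triv_part V)))) = map Posz f].

(* Main.v *)
Require Import Defs.
From Stdlib Require Import Arith Ring Lia.
From HB Require Import structures.
From mathcomp Require Import all_boot all_order all_algebra.
Set Implicit Arguments. Unset Strict Implicit. Unset Printing Implicit Defensive.


Definition lp (V : finType) t (A : {set (V + 'I_t)}) : {set V} := [set v | inl v \in A].
Definition rp (V : finType) t (A : {set (V + 'I_t)}) : {set 'I_t} := [set i | inr i \in A].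
Definition jn (V : finType) t (S : {set V}) (T : {set 'I_t}) : {set (V + 'I_t)} :=
  (@inl V 'I_t) @: S :|: (@inr V 'I_t) @: T.
Definition blks (V : finType) t (W : 'I_t -> {set V}) (S : {set V}) : {set 'I_t} :=
  [set i | [exists v in S, v \in W i]].

Lemma jn_lp_rp (V : finType) t (A : {set (V + 'I_t)}) : jn (lp A) (rp A) = A.
Proof.
apply/setP => -[v|i]; rewrite !inE.
- apply/idP/idP.
  + by case/orP => /imsetP [x]; rewrite inE // => H [->].
  + by move=> H; apply/orP; left; apply/imsetP; exists v; rewrite ?inE.
- apply/idP/idP.
  + by case/orP => /imsetP [x]; rewrite inE // => H [->].
  + by move=> H; apply/orP; right; apply/imsetP; exists i; rewrite ?inE.
Qed.

Lemma lp_jn (V : finType) t (S : {set V}) (T : {set 'I_t}) : lp (jn S T) = S.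
Proof.
apply/setP => v; rewrite !inE; apply/idP/idP.
- by case/orP => /imsetP [x] // H [->].
- by move=> H; apply/orP; left; apply/imsetP; exists v.
Qed.

Lemma rp_jn (V : finType) t (S : {set V}) (T : {set 'I_t}) : rp (jn S T) = T.
Proof.
apply/setP => v; rewrite !inE; apply/idP/idP.
- by case/orP => /imsetP [x] // H [->].
- by move=> H; apply/orP; right; apply/imsetP; exists v.
Qed.

Lemma card_jn (V : finType) t (S : {set V}) (T : {set 'I_t}) : #|jn S T| = #|S| + #|T|.
Proof.
rewrite /jn cardsU !card_imset; try by move=> ? ? [].
suff -> : (@inl V 'I_t) @: S :&: (@inr V 'I_t) @: T = set0 by rewrite cards0 subn0.
apply/setP => x; rewrite !inE; apply/negP => /andP [/imsetP [a _ ->] /imsetP [b _]] //.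
Qed.

Lemma indep_jn (V : finType) (adj : rel V) t (W : 'I_t -> {set V}) S T :
  indep (whisker adj W) (jn S T) = indep adj S && [disjoint T & blks W S].
Proof.
apply/idP/idP.
- move/forallP => H; apply/andP; split.
  + apply/forallP => x; apply/implyP => xS; apply/forallP => y; apply/implyP => yS.
    have := H (inl x); rewrite (_ : inl x \in jn S T) /=; last by rewrite inE; apply/orP; left; apply/imsetP; exists x.
    move/forallP/(_ (inl y)); rewrite (_ : inl y \in jn S T) //.
    by rewrite inE; apply/orP; left; apply/imsetP; exists y.
  + apply/pred0P => i /=; apply/negP => /andP [iT]; rewrite /blks inE => /existsP [v /andP [vS vW]].
    have := H (inl v); rewrite (_ : inl v \in jn S T) /=; last by rewrite inE; apply/orP; left; apply/imsetP; exists v.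
    move/forallP/(_ (inr i)); rewrite (_ : inr i \in jn S T) /=; last by rewrite inE; apply/orP; right; apply/imsetP; exists i.
    by rewrite vW.
- case/andP => /forallP HS /pred0P HT.
  apply/forallP => x; apply/implyP; rewrite inE => /orP [] /imsetP [a aX ->];
  apply/forallP => y; apply/implyP; rewrite inE => /orP [] /imsetP [b bX ->] /=.
  + by move: (HS a); rewrite aX /= => /forallP /(_ b); rewrite bX.
  + apply/negP => abW; have := HT b; rewrite /= bX /blks inE => /negbT/negP; apply.
    by apply/existsP; exists a; rewrite aX.
  + apply/negP => abW; have := HT a; rewrite /= aX /blks inE => /negbT/negP; apply.
    by apply/existsP; exists b; rewrite bX.
  + by [].
Qed.

Lemma card_blks (V : finType) (adj : rel V) t (W : 'I_t -> {set V}) (S : {set V}) :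
  clique_vpart adj W -> indep adj S -> #|blks W S| = #|S|.
Proof.
case=> Hcl Hdis _ Hcov HS.
pose blk v := xchoose (Hcov v).
have blkP v : v \in W (blk v) by exact: (xchooseP (Hcov v)).
have blkU v i : v \in W i -> i = blk v.
  move=> vi; apply/eqP; apply/negPn/negP => ne.
  by move: (Hdis _ _ ne) => /disjoint_setI0 /setP /(_ v); rewrite !inE vi blkP.
have -> : blks W S = blk @: S.
  apply/setP => i; rewrite /blks inE; apply/existsP/imsetP.
  - by case=> v /andP [vS vi]; exists v => //; apply: blkU.
  - by case=> v vS ->; exists v; rewrite vS blkP.
apply: card_in_imset => u v uS vS e; apply/eqP; apply/negPn/negP => ne.
have := Hcl (blk u) u v (blkP u); rewrite e => /(_ (blkP v) ne) a.
by move: HS => /forallP /(_ u); rewrite uS /= => /forallP /(_ v); rewrite vS a.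
Qed.

Lemma indep_card_le (V : finType) (adj : rel V) t (W : 'I_t -> {set V}) (S : {set V}) :
  clique_vpart adj W -> indep adj S -> #|S| <= t.
Proof.
move=> H HS; rewrite -(card_blks H HS).
by apply: leq_trans (max_card _) _; rewrite card_ord.
Qed.

Lemma count_faces (V : finType) (adj : rel V) t (W : 'I_t -> {set V}) k :
  clique_vpart adj W ->
  #|[set A in Ind (whisker adj W) | #|A| == k]| =
  \sum_(S : {set V} | indep adj S && (#|S| <= k)) 'C(t - #|S|, k - #|S|).
Proof.
move=> HW.
rewrite -sum1_card.
rewrite (reindex (fun p : {set V} * {set 'I_t} => jn p.1 p.2)); last first.
  apply: onW_bij; exists (fun A => (lp A, rp A)).
  - by case=> S T /=; rewrite lp_jn rp_jn.
  - by move=> A /=; rewrite jn_lp_rp.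
rewrite (eq_bigl (fun p : {set V} * {set 'I_t} => indep adj p.1 && ([disjoint p.2 & blks W p.1] && (#|p.1| + #|p.2| == k)))); last first.
  by case=> S T /=; rewrite !inE indep_jn card_jn andbA.
rewrite -(pair_big_dep (fun S : {set V} => indep adj S) (fun (S : {set V}) (T : {set 'I_t}) => [disjoint T & blks W S] && (#|S| + #|T| == k)) (fun _ _ => 1)) /=.
rewrite big_mkcondr /=; apply: eq_bigr => S HS.
rewrite sum1_card.
have cb := card_blks HW HS.
case: leqP => Sk.
- rewrite -cb.
  have <- : #|~: blks W S| = t - #|blks W S|.
    by rewrite -[#|~: _|](addKn #|blks W S|) cardsC card_ord.
  rewrite -cards_draws; apply: eq_card => T; rewrite inE unfold_in /= disjoints_subset cb.
  congr (_ && _); apply/eqP/eqP => [<-|->]; first by rewrite addKn.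
  by rewrite subnKC.
- apply: eq_card0 => T; rewrite !inE; apply/negP => /andP [_ /eqP e].
  by move: Sk; rewrite -e ltnNge leq_addr.
Qed.
Section Alg.
Import GRing.Theory Num.Theory.

Lemma bin_trinom n m l : l <= m -> m <= n ->
  'C(n, l) * 'C(n - l, m - l) = 'C(n, m) * 'C(m, l).
Proof.
move=> lm mn.
have ln := leq_trans lm mn.
apply/eqP; rewrite -(eqn_pmul2r (_ : 0 < l`! * (m - l)`! * (n - m)`!)); last by rewrite !muln_gt0 !fact_gt0.
have e : n - l - (m - l) = n - m.
  by move: lm mn => /leP ? /leP ?; rewrite -!minusE; lia.
have E1 : 'C(n, l) * 'C(n - l, m - l) * (l`! * (m - l)`! * (n - m)`!) =
  'C(n, l) * (l`! * ('C(n - l, m - l) * ((m - l)`! * (n - l - (m - l))`!))).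
  by rewrite e -!multE; ring.
have E2 : 'C(n, m) * 'C(m, l) * (l`! * (m - l)`! * (n - m)`!) =
  'C(n, m) * (('C(m, l) * (l`! * (m - l)`!)) * (n - m)`!).
  by rewrite -!multE; ring.
rewrite E1 E2 bin_fact ?leq_sub2r // bin_fact // mulnA bin_fact //.
by rewrite -mulnA bin_fact.
Qed.

Lemma alt_sum m : (\sum_(l < m.+1) (-1) ^+ (m - l) * ('C(m, l))%:Z = (m == 0)%:Z)%R.
Proof.
have := exprDn (-1 : int) 1 m; rewrite addNr expr0n natz => ->.
apply: eq_bigr => i _; by rewrite expr1n mulr1 -mulr_natr natz.
Qed.

Lemma key t s j : s <= t -> j <= t ->
  (\sum_(i < j.+1) (-1) ^+ (j - i) * ('C(t - i, j - i))%:Z * ((s <= i) * 'C(t - s, i - s))%:Z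
   = (s == j)%:Z)%R.
Proof.
move=> st jt.
case: (ltnP j s) => [js | sj].
  rewrite big1 ?(gtn_eqF js) // => i _.
  have : ~~ (s <= i) by rewrite -ltnNge; apply: leq_ltn_trans js; rewrite -ltnS ltn_ord.
  by move/negbTE => ->; rewrite mul0n mulr0.
rewrite -(big_mkord xpredT (fun i => (-1) ^+ (j - i) * ('C(t - i, j - i))%:Z * ((s <= i) * 'C(t - s, i - s))%:Z)%R).
rewrite (big_cat_nat (leq0n s) (leq_trans sj (leqnSn j))) /=.
rewrite big_nat_cond big1 ?add0r; last first.
  by move=> i /andP [/andP [_ iss] _]; rewrite leqNgt iss mul0n mulr0.
rewrite -{1}(add0n s) big_addn subSn // big_mkord.
set n := t - s; set m := j - s.
have mn : m <= n by rewrite leq_sub2r.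
rewrite (eq_bigr (fun i : 'I_m.+1 => ('C(n, m))%:Z * ((-1) ^+ (m - i) * ('C(m, i))%:Z))%R); last first.
  move=> i _.
  have im : i <= m by rewrite -ltnS ltn_ord.
  rewrite leq_addl mul1n addnK subnDAC -/m [t - _]subnDAC -/n.
  by rewrite -mulrA -PoszM mulnC bin_trinom // PoszM mulrCA.
rewrite -big_distrr /= alt_sum.
have -> : (m == 0) = (s == j).
  by rewrite /m subn_eq0 eqn_leq sj.
case: eqP => [e|_]; last by rewrite mulr0.
by rewrite /m e subnn bin0 mulr1.
Qed.

Lemma cdim_whisker (V : finType) (adj : rel V) t (W : 'I_t -> {set V}) :
  clique_vpart adj W -> cdim (Ind (whisker adj W)) = t.
Proof.
move=> HW; apply/eqP; rewrite eqn_leq; apply/andP; split.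
- apply/bigmax_leqP => A; rewrite inE => HA.
  rewrite -(jn_lp_rp A) card_jn; move: HA; rewrite -{1}(jn_lp_rp A) indep_jn => /andP [HS Hd].
  have cb := card_blks HW HS.
  have : #|rp A| <= #|~: blks W (lp A)| by apply: subset_leq_card; rewrite -disjoints_subset.
  have -> : #|~: blks W (lp A)| = t - #|blks W (lp A)|.
    by rewrite -[#|~: _|](addKn #|blks W (lp A)|) cardsC card_ord.
  rewrite cb => h; apply: (leq_trans (leq_add (leqnn _) h)); by rewrite subnKC ?(indep_card_le HW HS).
- have H0 : jn set0 [set: 'I_t] \in Ind (whisker adj W).
    rewrite inE indep_jn; apply/andP; split.
      by apply/forallP => x; rewrite inE.
    apply/pred0P => i /=; rewrite /blks !inE; apply/negbTE; rewrite negb_exists.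
    by apply/forallP => v; rewrite inE.
  have := @leq_bigmax_cond _ (mem (Ind (whisker adj W))) (fun A => #|A|) _ H0.
  by rewrite card_jn cards0 cardsT card_ord.
Qed.

Lemma PoszSum (I : finType) (P : pred I) (F : I -> nat) :
  Posz (\sum_(i | P i) F i) = (\sum_(i | P i) Posz (F i))%R.
Proof. by rewrite -natz natr_sum; apply: eq_bigr => i _; rewrite natz. Qed.

Lemma nth_fvec (V : finType) (D : {set {set V}}) i : i <= cdim D ->
  nth 0 (fvec D) i = #|[set A in D | #|A| == i]|.
Proof.
by move=> h; rewrite /fvec (nth_map 0) ?size_iota ?nth_iota.
Qed.

Lemma hvec_whisker (V : finType) (adj : rel V) t (W : 'I_t -> {set V}) :
  clique_vpart adj W ->
  hvec (Ind (whisker adj W)) = [seq Posz #|[set S in Ind adj | #|S| == j]| | j <- iota 0 t.+1].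
Proof.
move=> HW; rewrite /hvec cdim_whisker //.
apply/eq_in_map => j; rewrite mem_iota add0n ltnS => /andP [_ jt].
rewrite (eq_bigr (fun i : 'I_j.+1 => \sum_(S : {set V} | indep adj S)
   ((-1) ^+ (j - i) * ('C(t - i, j - i))%:Z * ((#|S| <= i) * 'C(t - #|S|, i - #|S|))%:Z))%R); last first.
  move=> i _; have it : i <= t by apply: leq_trans jt; rewrite -ltnS.
  rewrite nth_fvec ?cdim_whisker // count_faces // big_mkcondr PoszSum mulr_sumr.
  by apply: eq_bigr => S _; case: ifP => h; rewrite ?mul1n ?mul0n.
rewrite exchange_big /=.
rewrite (eq_bigr (fun S : {set V} => Posz (#|S| == j))); last first.
  by move=> S HS; rewrite key // (indep_card_le HW HS).
rewrite -PoszSum -sum1_card; congr Posz.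
rewrite [RHS](eq_bigl (fun S => indep adj S && (#|S| == j))); last by move=> S; rewrite !inE.
rewrite big_mkcondr /=; apply: eq_bigr => S _.
by case: eqP.
Qed.

Lemma strip0_pad (s : seq nat) x k : 0 < x ->
  strip0 (map Posz (rcons s x) ++ nseq k 0%R) = map Posz (rcons s x).
Proof.
move=> x0; rewrite /strip0 rev_cat map_rcons rev_rcons find_cat.
have -> : has (fun y : int => y != 0%R) (rev (nseq k 0%R)) = false.
  by rewrite rev_nseq; elim: k => //= k ->; rewrite eqxx.
rewrite /= -lt0n x0 addn0 drop_size_cat ?size_rev ?size_nseq //.
by rewrite rev_cons revK.
Qed.

Lemma main (V : finType) (adj : rel V) t (W : 'I_t -> {set V}) :
  clique_vpart adj W ->
  strip0 (hvec (Ind (whisker adj W))) = map Posz (fvec (Ind adj)).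
Proof.
move=> HW; rewrite hvec_whisker //.
set F := fun j => #|[set S in Ind adj | #|S| == j]|.
set a := cdim (Ind adj).
have set0I : set0 \in Ind adj by rewrite inE; apply/forallP => x; rewrite inE.
have ne : 0 < #|Ind adj| by apply/card_gt0P; exists set0.
have [S0 S0I S0m] := eq_bigmax_cond (fun A : {set V} => #|A|) ne.
have aS0 : a = #|S0| by rewrite /a /cdim S0m.
have at_ : a <= t by rewrite aS0; apply: (indep_card_le HW); move: S0I; rewrite inE.
have Fpos j : j <= a -> 0 < F j.
  move=> ja; rewrite /F card_gt0.
  have : 0 < #|[set B : {set V} | B \subset S0 & #|B| == j]|.
    by rewrite cards_draws bin_gt0 -aS0.
  rewrite card_gt0 => /set0Pn [B]; rewrite inE => /andP [BS0 Bj].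
  apply/set0Pn; exists B; rewrite !inE Bj andbT.
  move: S0I; rewrite inE => /forallP H; apply/forallP => x; apply/implyP => xB.
  move: (H x); rewrite (subsetP BS0 _ xB) /= => /forallP H2.
  apply/forallP => y; apply/implyP => yB; move: (H2 y).
  by rewrite (subsetP BS0 _ yB).
have F0 j : a < j -> F j = 0.
  move=> aj; apply/eqP; rewrite cards_eq0; apply/eqP/setP => S; rewrite !inE.
  apply/negP => /andP [SI /eqP Sj].
  have h : #|S| <= a by rewrite /a /cdim; apply: (leq_bigmax_cond (F := fun A : {set V} => #|A|)); rewrite inE.
  rewrite Sj in h.
  by move: (leq_trans aj h); rewrite ltnn.
have -> : t.+1 = a.+1 + (t - a) by rewrite addSn subnKC.
rewrite iotaD map_cat add0n.
have -> : [seq Posz (F j) | j <- iota a.+1 (t - a)] = nseq (t - a) 0%R.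
  rewrite -{2}(size_iota a.+1 (t - a)).
  have : all (fun j => a < j) (iota a.+1 (t - a)).
    by apply/allP => j; rewrite mem_iota => /andP [].
  elim: (iota a.+1 (t - a)) => [|y s IH] //= /andP [ay /IH ->].
  by rewrite F0.
have -> : fvec (Ind adj) = map F (iota 0 a.+1) by [].
have -> : iota 0 a.+1 = rcons (iota 0 a) a by rewrite -addn1 iotaD cats1.
have -> : [seq Posz (F j) | j <- rcons (iota 0 a) a] = map Posz (map F (rcons (iota 0 a) a)).
  by rewrite -map_comp.
by rewrite map_rcons strip0_pad //; apply: Fpos.
Qed.
End Alg.

Lemma triv_vpart (V : finType) (adj : rel V) : clique_vpart adj (@triv_part V).
Proof.
split.
- by move=> i x y; rewrite /triv_part !inE => /eqP -> /eqP -> /eqP.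
- move=> i j ij; rewrite /triv_part disjoints1 inE.
  by apply: contra ij => /eqP /enum_val_inj ->.
- by move=> i j /set1_inj /enum_val_inj.
- by move=> v; exists (enum_rank v); rewrite /triv_part enum_rankK inE.
Qed.

Theorem theorem3p6 (f : seq nat) (hpos : all (fun x => 0 < x) f) :
  (is_flag_fvec f <-> is_hvec_whisker_part f) /\
  (is_hvec_whisker_part f <-> is_hvec_whisker_triv f).
Proof.
have flag_triv : is_flag_fvec f -> is_hvec_whisker_triv f.
  case=> V [adj [Hg HV Hf]]; exists V, adj; split => //.
  by rewrite main ?Hf //; apply: triv_vpart.
have triv_part_ : is_hvec_whisker_triv f -> is_hvec_whisker_part f.
  case=> V [adj [Hg HV Hf]]; exists V, adj, #|V|, (@triv_part V); split => //.
  exact: triv_vpart.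
have part_flag : is_hvec_whisker_part f -> is_flag_fvec f.
  case=> V [adj [t [W [Hg HV HW Hf]]]]; exists V, adj; split => //.
  by move: Hf; rewrite main // => /inj_map; apply => x y [].
split; split => [h|h].
- exact: triv_part_ (flag_triv h).
- exact: part_flag h.
- exact: flag_triv (part_flag h).
- exact: triv_part_ h.
Qed.
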